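(* Let $W$ be a Coxeter group, $w\in W$, $J\subseteq S$, and suppose $w=w^Jw_J$ is a Billey--Postnikov decomposition such that $\supp(w^J)\cap\supp(w_J)=\{s\}$ for some $s\in S$. Then the middle multiplication map $\phi: x\mapsto x^J\, s\, x_J$ is an automorphism of the Bruhat graph $\Gamma(e,w)$.
   Context: $(W,S)$ is a Coxeter system with reflections $T$, length $\ell$, Bruhat order $\le$, identity $e$; $\Gamma(e,w)$ is the simple undirected graph on $[e,w]$ with edges $\{x,y\}$ whenever $y=xt$, $t\in T$. For $J\subseteq S$, $W_J$ is the subgroup generated by $J$; each $x\in W$ factors uniquely as $x=x^Jx_J$ with $x_J\in W_J$ and $x^J$ the unique minimal-length element of $xW_J$ (then $\ell(x)=\ell(x^J)+\ell(x_J)$). $\supp(x)$ is the set of simple generators appearing in a reduced word of $x$, and $D_L(x)=\{s\in S:\ell(sx)<\ell(x)\}$. The decomposition $w=w^Jw_J$ is a Billey--Postnikov (BP) decomposition if $\supp(w^J)\cap J\subseteq D_L(w_J)$. *)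

(* Defs.v *)
From HB Require Import structures.
From mathcomp Require Import all_boot.
From Stdlib Require Import ClassicalEpsilon Relation_Operators.
Set Implicit Arguments.
Unset Strict Implicit.
Unset Printing Implicit Defensive.
Local Open Scope group_scope.

Definition word_prod (W : groupType) (l : seq W) : W := foldr (fun a b => a * b) 1 l.

Definition is_word (W : groupType) (A : W -> Prop) (l : seq W) : Prop :=
  forall x, x \in l -> A x.

(** Coxeter system (W,S): S is a generating set of elements of order 2 and
    W has the presentation < S | (st)^{m(s,t)} = 1 >, m(s,t) = order of st
    (expressed by the universal property of the presentation: any map S -> G
    satisfying the relations (f s f t)^m = 1 whenever (st)^m = 1 in W extends
    to a group homomorphism W -> G). *)
Definition coxeter_system (W : groupType) (S : W -> Prop) : Prop :=
  [/\ (forall s, S s -> s <> 1 /\ s * s = 1),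
      (forall w : W, exists l, is_word S l /\ word_prod l = w) &
      (forall (G : groupType) (f : W -> G),
          (forall s t m, S s -> S t -> (s * t) ^+ m = 1 -> (f s * f t) ^+ m = 1) ->
          exists phi : W -> G,
            (forall x y, phi (x * y) = phi x * phi y) /\
            (forall s, S s -> phi s = f s))].

Definition is_reduced_word (W : groupType) (S : W -> Prop) (w : W) (l : seq W) : Prop :=
  [/\ is_word S l, word_prod l = w &
      forall l', is_word S l' -> word_prod l' = w -> size l <= size l'].

Definition coxeter_length (W : groupType) (S : W -> Prop) (w : W) : nat :=
  epsilon (inhabits 0%N) (fun n => exists l, is_reduced_word S w l /\ size l = n).

Definition reflection (W : groupType) (S : W -> Prop) (t : W) : Prop :=
  exists u s, S s /\ t = u * s * u^-1.

Definition bruhat_step (W : groupType) (S : W -> Prop) (x y : W) : Prop :=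
  exists t, [/\ reflection S t, y = x * t & coxeter_length S x < coxeter_length S y].

Definition bruhat_le (W : groupType) (S : W -> Prop) : W -> W -> Prop :=
  clos_refl_trans W (bruhat_step S).

Definition in_parabolic (W : groupType) (J : W -> Prop) (x : W) : Prop :=
  exists l, is_word J l /\ word_prod l = x.

Definition min_coset_rep (W : groupType) (S J : W -> Prop) (x : W) : W :=
  epsilon (inhabits (1 : W))
    (fun u => (exists v, in_parabolic J v /\ u = x * v) /\
              forall v, in_parabolic J v -> coxeter_length S u <= coxeter_length S (x * v)).

Definition parabolic_part (W : groupType) (S J : W -> Prop) (x : W) : W :=
  (min_coset_rep S J x)^-1 * x.

Definition supp (W : groupType) (S : W -> Prop) (x r : W) : Prop :=
  S r /\ exists l, is_reduced_word S x l /\ r \in l.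

Definition left_descent (W : groupType) (S : W -> Prop) (x r : W) : Prop :=
  S r /\ coxeter_length S (r * x) < coxeter_length S x.

Definition BP_decomposition (W : groupType) (S J : W -> Prop) (w : W) : Prop :=
  forall r, supp S (min_coset_rep S J w) r -> J r ->
            left_descent S (parabolic_part S J w) r.

Definition bruhat_interval (W : groupType) (S : W -> Prop) (u w : W) (x : W) : Prop :=
  bruhat_le S u x /\ bruhat_le S x w.

Definition bruhat_edge (W : groupType) (S : W -> Prop) (x y : W) : Prop :=
  exists t, reflection S t /\ y = x * t.

Definition graph_automorphism (W : Type) (V : W -> Prop) (E : W -> W -> Prop)
    (f : W -> W) : Prop :=
  [/\ (forall x, V x -> V (f x)),
      (forall x y, V x -> V y -> f x = f y -> x = y),
      (forall y, V y -> exists x, V x /\ f x = y) &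
      (forall x y, V x -> V y -> (E x y <-> E (f x) (f y)))].

(* Main.v *)
Require Import Defs.
From HB Require Import structures.
From mathcomp Require Import all_boot zify.
From mathcomp Require boolp.
From Stdlib Require Import ClassicalEpsilon Relation_Operators Classical.
Set Implicit Arguments.
Unset Strict Implicit.
Unset Printing Implicit Defensive.
Local Open Scope group_scope.


Section GL.
Variable W : groupType.
Implicit Types x y z : W.
Lemma gA x y z : x * (y * z) = x * y * z. Proof. exact: mulgA. Qed.
Lemma g1l x : 1 * x = x. Proof. exact: mul1g. Qed.
Lemma g1r x : x * 1 = x. Proof. exact: mulg1. Qed.
Lemma gV x : x * x^-1 = 1. Proof. exact: mulgV. Qed.
Lemma gVl x : x^-1 * x = 1. Proof. exact: mulVg. Qed.
Lemma gK x y : x * y * y^-1 = x. Proof. exact: mulgK. Qed.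
Lemma gVK x y : x * y^-1 * y = x. Proof. exact: mulgVK. Qed.
Lemma gKl x y : x^-1 * (x * y) = y. Proof. exact: mulKg. Qed.
Lemma gVKl x y : x * (x^-1 * y) = y. Proof. exact: mulVKg. Qed.
Lemma gInvM x y : (x * y)^-1 = y^-1 * x^-1. Proof. exact: invgM. Qed.
Lemma gInvK x : x^-1^-1 = x. Proof. exact: invgK. Qed.
Lemma gInv1 : (1 : W)^-1 = 1. Proof. exact: invg1. Qed.
Lemma gI x y z : x * y = x * z -> y = z. Proof. exact: mulgI. Qed.
Lemma gIr x y z : y * x = z * x -> y = z. Proof. exact: mulIg. Qed.
Lemma gInvInj x y : x^-1 = y^-1 -> x = y. Proof. exact: invg_inj. Qed.
Lemma gexpS x n : x ^+ n.+1 = x * x ^+ n. Proof. exact: expgS. Qed.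
Lemma gexpSr x n : x ^+ n.+1 = x ^+ n * x. Proof. exact: expgSr. Qed.
Lemma gexpD x m n : x ^+ (m + n) = x ^+ m * x ^+ n. Proof. exact: expgnDr. Qed.
Lemma gexp1n n : (1 : W) ^+ n = 1. Proof. exact: expg1n. Qed.
Lemma gInvE x y : x * y = 1 -> x^-1 = y. Proof. exact: mulg1_eq. Qed.
End GL.

Lemma conjK (W : groupType) (x t : W) : x * (x^-1 * t * x) * x^-1 = t.
Proof. by rewrite !mulgA mulgV mul1g mulgK. Qed.

Section Semi.
Variable W : groupType.
Definition GG := (W * (W -> bool))%type.
HB.instance Definition _ := boolp.gen_eqMixin GG.
HB.instance Definition _ := boolp.gen_choiceMixin GG.

Definition gg_mul (a b : GG) : GG :=
  (a.1 * b.1, fun t => a.2 t (+) b.2 (a.1^-1 * t * a.1)).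
Definition gg_one : GG := (1, fun _ => false).
Definition gg_inv (a : GG) : GG := (a.1^-1, fun t => a.2 (a.1 * t * a.1^-1)).

Lemma gg_mulA : associative gg_mul.
Proof.
move=> [x A] [y B] [z C]; rewrite /gg_mul /=; congr pair; first exact: mulgA.
apply: boolp.funext => t; rewrite addbA; congr (_ (+) _).
by rewrite (invgM x y) !mulgA.
Qed.
Lemma gg_mul1 : left_id gg_one gg_mul.
Proof.
move=> [x A]; rewrite /gg_mul /gg_one /=; congr pair; first exact: mul1g.
apply: boolp.funext => t /=; by rewrite (invg1 W) (mulg1 (1 * t)) (mul1g t).
Qed.
Lemma gg_mulg1 : right_id gg_one gg_mul.
Proof. move=> [x A]; rewrite /gg_mul /gg_one /=; congr pair; first exact: mulg1.
apply: boolp.funext => t; by rewrite addbF. Qed.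
Lemma gg_mulV : left_inverse gg_one gg_inv gg_mul.
Proof.
move=> [x A]; rewrite /gg_mul /gg_inv /gg_one /=; congr pair; first exact: mulVg.
apply: boolp.funext => t /=.
by rewrite (invgK x) addbb.
Qed.
Lemma gg_mulgV : right_inverse gg_one gg_inv gg_mul.
Proof.
move=> [x A]; rewrite /gg_mul /gg_inv /gg_one /=; congr pair; first exact: mulgV.
apply: boolp.funext => t /=.
by rewrite conjK addbb.
Qed.
HB.instance Definition _ := isGroup.Build GG gg_mulA gg_mul1 gg_mulg1 gg_mulV gg_mulgV.
End Semi.

Definition SB := bool.
HB.instance Definition _ := Choice.on SB.
Lemma sb_mulA : associative addb. Proof. exact: addbA. Qed.
HB.instance Definition _ := isGroup.Build SB sb_mulA addFb addbF addbb addbb.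

Section Words.
Variable W : groupType.
Implicit Types (l : seq W) (x y : W).

Lemma wp_nil : word_prod ([::] : seq W) = 1. Proof. by []. Qed.
Lemma wp_cons a l : word_prod (a :: l) = a * word_prod l. Proof. by []. Qed.
Lemma wp_cat l1 l2 : word_prod (l1 ++ l2) = word_prod l1 * word_prod l2.
Proof. elim: l1 => [|a l1 IH] /=; first by rewrite g1l. by rewrite IH gA. Qed.
Lemma wp_rcons l a : word_prod (rcons l a) = word_prod l * a.
Proof. by rewrite -cats1 wp_cat /= g1r. Qed.

Lemma is_word_nil (A : W -> Prop) : is_word A [::]. Proof. by move=> x. Qed.
Lemma is_word_cons (A : W -> Prop) a l : is_word A (a :: l) <-> A a /\ is_word A l.
Proof.
split; first by move=> H; split; [apply: H; rewrite inE eqxx | move=> x Hx; apply: H; rewrite inE Hx orbT].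
by case=> Ha Hl x; rewrite inE => /orP [/eqP -> | /Hl].
Qed.
Lemma is_word_cat (A : W -> Prop) l1 l2 : is_word A (l1 ++ l2) <-> is_word A l1 /\ is_word A l2.
Proof.
split; first by move=> H; split => x Hx; apply: H; rewrite mem_cat Hx ?orbT.
by case=> H1 H2 x; rewrite mem_cat => /orP [/H1|/H2].
Qed.
Lemma is_word_subseq (A : W -> Prop) l1 l2 : subseq l1 l2 -> is_word A l2 -> is_word A l1.
Proof. by move=> /mem_subseq Hs H x /Hs /H. Qed.
Lemma is_word_rev (A : W -> Prop) l : is_word A l -> is_word A (rev l).
Proof. by move=> H x; rewrite mem_rev => /H. Qed.
Lemma is_word_rcons (A : W -> Prop) l a : is_word A (rcons l a) <-> is_word A l /\ A a.
Proof.
rewrite -cats1 is_word_cat is_word_cons; split; first by case=> ? [].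
by case=> ? ?; split => //; split => //; exact: is_word_nil.
Qed.
Lemma is_word_impl (A B : W -> Prop) l : (forall x, A x -> B x) -> is_word A l -> is_word B l.
Proof. by move=> AB H x /H /AB. Qed.

Lemma wp_rev_inv (A : W -> Prop) l : (forall a, A a -> a * a = 1) -> is_word A l ->
  word_prod (rev l) = (word_prod l)^-1.
Proof.
move=> Hinv; elim: l => [|a l IH] /=; first by rewrite gInv1.
move/is_word_cons => [Ha Hl]; rewrite rev_cons wp_rcons IH // gInvM.
congr (_ * _); symmetry; exact: gInvE (Hinv a Ha).
Qed.

Lemma par1 (A : W -> Prop) : in_parabolic A 1.
Proof. exists [::]; split => //; exact: is_word_nil. Qed.
Lemma par_gen (A : W -> Prop) a : A a -> in_parabolic A a.
Proof. move=> Ha; exists [:: a]; split; [by apply/is_word_cons; split => //; exact: is_word_nil | by rewrite /= g1r]. Qed.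
Lemma parM (A : W -> Prop) x y : in_parabolic A x -> in_parabolic A y -> in_parabolic A (x * y).
Proof.
move=> [l1 [H1 <-]] [l2 [H2 <-]]; exists (l1 ++ l2); split; last by rewrite wp_cat.
by apply/is_word_cat.
Qed.
Lemma parV (A : W -> Prop) x : (forall a, A a -> a * a = 1) -> in_parabolic A x -> in_parabolic A x^-1.
Proof.
move=> Hinv [l [H <-]]; exists (rev l); split; first exact: is_word_rev.
exact: wp_rev_inv H.
Qed.
Lemma par_word (A : W -> Prop) l : is_word A l -> in_parabolic A (word_prod l).
Proof. by move=> H; exists l. Qed.
Lemma par_impl (A B : W -> Prop) x : (forall a, A a -> B a) -> in_parabolic A x -> in_parabolic B x.
Proof. move=> AB [l [H <-]]; exists l; split => //; exact: is_word_impl H. Qed.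

Lemma cat_cons_eq l1 (a : W) l2 m1 m2 : l1 ++ a :: l2 = m1 ++ m2 ->
  (exists m, m1 = l1 ++ a :: m /\ l2 = m ++ m2) \/ (exists m, m2 = m ++ a :: l2 /\ l1 = m1 ++ m).
Proof.
elim: m1 l1 => [|b m1 IH] l1 /=.
  by move=> <-; right; exists l1; split.
case: l1 => [|c l1] /= [<-] E.
  by left; exists m1; split.
case: (IH _ E) => [[m [-> ->]]|[m [-> ->]]]; [left|right]; by exists m.
Qed.

Lemma subseq_cat_split (s l1 l2 : seq W) : subseq s (l1 ++ l2) ->
  exists s1 s2, [/\ s = s1 ++ s2, subseq s1 l1 & subseq s2 l2].
Proof.
move=> /subseqP [m Hm ->].
exists (mask (take (size l1) m) l1), (mask (drop (size l1) m) l2); split.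
- rewrite -mask_cat ?cat_take_drop // size_take; move: Hm; rewrite size_cat => ->.
  by case: ltnP => // H; apply/eqP; rewrite eqn_leq H /= leq_addr.
- exact: mask_subseq.
- exact: mask_subseq.
Qed.
End Words.

Section Basic.
Variable W : groupType.
Variable S : W -> Prop.
Hypothesis cox : coxeter_system S.
Local Notation len := (coxeter_length S).
Local Notation wp := (@word_prod W).
Implicit Types (l : seq W) (x y : W).

Lemma S_inv s : S s -> s * s = 1. Proof. by case: cox => H _ _ /H []. Qed.
Lemma S_neq1 s : S s -> s <> 1. Proof. by case: cox => H _ _ /H []. Qed.
Lemma S_V s : S s -> s^-1 = s.
Proof. by move=> Hs; apply: (gI (x:=s)); rewrite gV S_inv. Qed.
Lemma gen x : exists l, is_word S l /\ wp l = x. Proof. by case: cox => _ H _. Qed.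

Lemma red_exists_aux n : forall l, size l <= n -> is_word S l -> exists l', is_reduced_word S (wp l) l'.
Proof.
elim: n => [|n IH] l Hs Hw.
  exists l; split => // l' _ _; by move: Hs; rewrite leqn0 => /eqP ->.
case: (classic (forall l', is_word S l' -> wp l' = wp l -> size l <= size l')) => H.
  by exists l; split.
case: (not_all_ex_not _ _ H) => l' H'.
case: (imply_to_and _ _ H') => Hw' H''.
case: (imply_to_and _ _ H'') => He /negP; rewrite -ltnNge => Hlt.
rewrite -He; apply: IH Hw'.
by rewrite -ltnS; apply: leq_trans Hlt Hs.
Qed.

Lemma red_exists x : exists l, is_reduced_word S x l.
Proof. case: (gen x) => l [Hw <-]; exact: red_exists_aux (leqnn _) Hw. Qed.

Lemma len_red x l : is_reduced_word S x l -> len x = size l.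
Proof.
move=> Hr; rewrite /coxeter_length.
have Hex : exists n, exists l, is_reduced_word S x l /\ size l = n by exists (size l), l.
case: (epsilon_spec (inhabits 0%N) _ Hex) => l' [[Hw' He' Hm'] <-].
case: Hr => Hw He Hm; apply/eqP; rewrite eqn_leq Hm' // Hm //.
Qed.

Lemma len_le l : is_word S l -> len (wp l) <= size l.
Proof.
move=> Hw; case: (red_exists (wp l)) => l' Hr; rewrite (len_red Hr).
by case: Hr => _ _; apply.
Qed.

Lemma red_len x l : is_reduced_word S x l -> is_word S l /\ wp l = x.
Proof. by case. Qed.

Lemma red_of_len l : is_word S l -> size l <= len (wp l) -> is_reduced_word S (wp l) l.
Proof.
move=> Hw Hs; split => // l' Hw' He; apply: (leq_trans Hs); rewrite -He; exact: len_le.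
Qed.

Lemma red_of_len_eq x l : is_word S l -> wp l = x -> size l = len x -> is_reduced_word S x l.
Proof. by move=> Hw <- Hs; apply: red_of_len => //; rewrite Hs. Qed.

Lemma len1 : len 1 = 0%N.
Proof. apply/eqP; rewrite -leqn0; exact: (len_le (is_word_nil S)). Qed.

Lemma len_eq0 x : len x = 0%N -> x = 1.
Proof.
case: (red_exists x) => l Hr; rewrite (len_red Hr); case: Hr => _ <- _.
by case: l.
Qed.

Lemma len_inv x : len x^-1 = len x.
Proof.
suff H : forall y, len y^-1 <= len y.
  apply/eqP; rewrite eqn_leq H /=; have := H x^-1; by rewrite gInvK.
move=> y; case: (red_exists y) => l Hr; rewrite (len_red Hr); case: Hr => Hw <- _.
rewrite -(wp_rev_inv S_inv Hw) -size_rev; apply: len_le; exact: is_word_rev.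
Qed.

Lemma len_mul x y : len (x * y) <= len x + len y.
Proof.
case: (red_exists x) => l1 Hr1; case: (red_exists y) => l2 Hr2.
rewrite (len_red Hr1) (len_red Hr2); case: Hr1 => Hw1 <- _; case: Hr2 => Hw2 <- _.
rewrite -wp_cat -size_cat; apply: len_le; exact/is_word_cat.
Qed.

Lemma lenS s : S s -> len s = 1%N.
Proof.
move=> Hs; apply/eqP; rewrite eqn_leq; apply/andP; split.
  have -> : s = wp [:: s] by rewrite /= g1r.
  apply: len_le; apply/is_word_cons; split => //; exact: is_word_nil.
rewrite lt0n; apply/eqP => /len_eq0; exact: S_neq1.
Qed.

Lemma red_cat x l1 l2 : is_reduced_word S x (l1 ++ l2) ->
  is_reduced_word S (wp l1) l1 /\ is_reduced_word S (wp l2) l2.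
Proof.
move=> Hr; have Hl := len_red Hr; case: Hr => /is_word_cat [Hw1 Hw2] He _.
have H1 := len_le Hw1; have H2 := len_le Hw2.
have H3 : len x <= len (wp l1) + len (wp l2) by rewrite -He wp_cat len_mul.
move: Hl H3; rewrite size_cat => ->.
move=> H3; split; apply: red_of_len => //.
  by rewrite -(leq_add2r (size l2)); apply: leq_trans H3 _; rewrite leq_add2l.
by rewrite -(leq_add2l (size l1)); apply: leq_trans H3 _; rewrite leq_add2r.
Qed.

Lemma red_cons x a l : is_reduced_word S x (a :: l) -> is_reduced_word S (wp l) l.
Proof. by move=> H; case: (@red_cat x [:: a] l H). Qed.

End Basic.

Section Exch.
Variable W : groupType.
Variable S : W -> Prop.
Hypothesis cox : coxeter_system S.
Local Notation len := (coxeter_length S).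
Local Notation wp := (@word_prod W).
Local Notation T := (reflection S).
Implicit Types (l : seq W) (x y : W).

Lemma univ (G : groupType) (f : W -> G) :
  (forall s t m, S s -> S t -> (s * t) ^+ m = 1 -> (f s * f t) ^+ m = 1) ->
  exists phi : W -> G, (forall x y, phi (x * y) = phi x * phi y) /\ (forall s, S s -> phi s = f s).
Proof. by case: cox => _ _; apply. Qed.

Lemma hom1 (G : groupType) (phi : W -> G) : (forall x y, phi (x * y) = phi x * phi y) -> phi 1 = 1.
Proof. move=> H; apply: (gI (x:=(phi 1))); by rewrite -H !g1r. Qed.

Lemma sign_exists : exists sg : W -> bool,
  (forall x y, sg (x * y) = sg x (+) sg y) /\ (forall s, S s -> sg s = true).
Proof.
have [phi [H1 H2]] := @univ SB (fun _ => true) (fun s t m _ _ _ => @expg1n _ m).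
by exists phi; split.
Qed.

Lemma T_conj t g : T t -> T (g * t * g^-1).
Proof. move=> [u [s [Hs ->]]]; exists (g * u), s; split => //; by rewrite gInvM !gA. Qed.
Lemma S_T s : S s -> T s.
Proof. by move=> Hs; exists 1, s; rewrite g1l gInv1 g1r. Qed.
Lemma T_inv t : T t -> t * t = 1.
Proof.
move=> [u [s [Hs ->]]]; rewrite !gA (gVK _ u) -(gA u) (S_inv cox Hs).
by rewrite g1r gV.
Qed.
Lemma T_V t : T t -> t^-1 = t.
Proof. by move=> Ht; apply: (gI (x:=t)); rewrite gV T_inv. Qed.
Lemma T_neq1 t : T t -> t <> 1.
Proof.
move=> [u [s [Hs ->]]] E; apply: (S_neq1 cox Hs); apply: (gI (x:=u)); apply: (gIr (x:=u^-1)).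
by rewrite g1r gV.
Qed.

Lemma odd_len_sg (sg : W -> bool) : (forall x y, sg (x * y) = sg x (+) sg y) ->
  (forall s, S s -> sg s = true) -> forall x, odd (len x) = sg x.
Proof.
move=> H1 H2 x; case: (red_exists cox x) => l Hr; rewrite (len_red Hr).
case: Hr => Hw <- _; elim: l Hw => [|a l IH] /=.
  move=> _; have := H1 1 1; rewrite g1r; by case: (sg 1).
by move=> /is_word_cons [Ha Hl]; rewrite H1 H2 // IH.
Qed.

Lemma odd_len_T t x : T t -> odd (len (x * t)) = ~~ odd (len x).
Proof.
have [sg [H1 H2]] := sign_exists; move=> [u [s [Hs ->]]].
rewrite !(odd_len_sg H1 H2) !H1 (H2 s Hs).
have := H1 u u^-1; rewrite gV; have := H1 1 1; rewrite g1r.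
by case: (sg 1); case: (sg u); case: (sg u^-1); case: (sg x).
Qed.

Lemma odd_len_Tl t x : T t -> odd (len (t * x)) = ~~ odd (len x).
Proof.
move=> Ht; by rewrite -(len_inv cox (t * x)) gInvM (T_V Ht) (odd_len_T _ Ht) (len_inv cox).
Qed.

Lemma len_T_neq t x : T t -> len (x * t) <> len x.
Proof. by move=> Ht E; have := odd_len_T x Ht; rewrite E; case: (odd _). Qed.
Lemma len_Tl_neq t x : T t -> len (t * x) <> len x.
Proof. by move=> Ht E; have := odd_len_Tl x Ht; rewrite E; case: (odd _). Qed.

Lemma len_mulS x s : S s -> len (x * s) = (len x).+1 \/ len (x * s) = (len x).-1 /\ 0 < len x.
Proof.
move=> Hs; have H1 : len (x * s) <= (len x).+1 by rewrite -addn1 -(lenS cox Hs) len_mul.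
have H2 : len x <= (len (x * s)).+1.
  by rewrite -addn1 -(lenS cox Hs); have := len_mul cox (x * s) s; rewrite -gA (S_inv cox Hs) g1r.
have H3 := len_T_neq (x:=x) (S_T Hs).
lia.
Qed.

End Exch.

Lemma conj_eq (W : groupType) (a t b : W) : (a^-1 * t * a == b) = (t == a * b * a^-1).
Proof.
apply/eqP/eqP => [<-|->].
  by rewrite !gA gV g1l gK.
by rewrite !gA gVl g1l gVK.
Qed.

Lemma conj_pow_aux (W : groupType) (c s : W) j : s * c^-1 = c * s ->
  c * (c ^+ j * s) * c^-1 = c ^+ j.+2 * s.
Proof.
move=> H; rewrite -(gA c (c ^+ j * s) c^-1) -(gA (c ^+ j) s c^-1) H (gA (c ^+ j) c s).
by rewrite -gexpSr (gA c) -gexpS.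
Qed.

Section Nfun.
Variable W : groupType.
Variable S : W -> Prop.
Hypothesis cox : coxeter_system S.
Local Notation len := (coxeter_length S).
Local Notation wp := (@word_prod W).
Local Notation T := (reflection S).
Implicit Types (l : seq W) (x y : W).

Definition fN (s : W) : GG W := (s, fun t => t == s).

Lemma GG_mulE (a b : GG W) : a * b = gg_mul a b. Proof. by []. Qed.
Lemma GG_oneE : (1 : GG W) = gg_one W. Proof. by []. Qed.

Lemma fN_pow s r k : S s -> S r ->
  (fN s * fN r) ^+ k = ((s * r) ^+ k, fun t => \big[addb/false]_(0 <= j < k.*2) (t == (s * r) ^+ j * s)).
Proof.
move=> Hs Hr; elim: k => [|k IH].
  rewrite expg0 GG_oneE /gg_one; congr pair; apply: boolp.funext => t /=; by rewrite big_geq.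
rewrite [LHS]gexpS IH !GG_mulE /gg_mul /fN /=; congr pair; first by rewrite -gexpS.
apply: boolp.funext => t /=.
rewrite doubleS big_nat_recl // big_nat_recl // expg0 expg1 g1l -addbA; congr (_ (+) _).
have Hsr : s * (s * r)^-1 = s * r * s by rewrite gInvM (S_V cox Hs) (S_V cox Hr) gA.
congr (_ (+) _).
  transitivity (t == s * r * s^-1); first exact: conj_eq.
  by rewrite (S_V cox Hs).
apply: eq_bigr => j _.
transitivity (t == (s * r) * ((s * r) ^+ j * s) * (s * r)^-1); first exact: conj_eq.
congr (_ == _); exact: conj_pow_aux.
Qed.

Lemma fN_rel s r m : S s -> S r -> (s * r) ^+ m = 1 -> (fN s * fN r) ^+ m = 1.
Proof.
move=> Hs Hr Hm; rewrite fN_pow // Hm GG_oneE /gg_one; congr pair.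
apply: boolp.funext => t; rewrite -addnn (@big_cat_nat _ _ _ m) ?leq_addr //.
rewrite -{2}(add0n m) big_addn addnK.
have E : \big[addb/false]_(0 <= i < m) (t == (s * r) ^+ (i + m) * s) =
    \big[addb/false]_(0 <= i < m) (t == (s * r) ^+ i * s).
  by apply: eq_bigr => j _; rewrite gexpD Hm g1r.
rewrite E; exact: addbb.
Qed.

Definition Nprops (N : W -> W -> bool) :=
  (forall x y t, N (x * y) t = N x t (+) N y (x^-1 * t * x)) /\
  (forall s t, S s -> N s t = (t == s)).

Lemma N_exists : exists N, Nprops N.
Proof.
have [phi [H1 H2]] := @univ _ _ cox (GG W) fN (fun s r m Hs Hr Hm => fN_rel Hs Hr Hm).
have Hfst : forall x, (phi x).1 = x.
  move=> x; case: (gen cox x) => l [Hw <-]; elim: l Hw => [|a l IH] /=.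
    by move=> _; rewrite (hom1 H1).
  move/is_word_cons => [Ha Hl]; by rewrite H1 H2 // GG_mulE /gg_mul /= IH.
exists (fun x => (phi x).2); split.
  by move=> x y t; rewrite H1 GG_mulE /gg_mul /= Hfst.
by move=> s t Hs; rewrite H2.
Qed.

Section WithN.
Variable N : W -> W -> bool.
Hypothesis HN : Nprops N.

Lemma N1 t : N 1 t = false.
Proof. case: HN => H _; have := H 1 1 t; rewrite !g1r gInv1 g1l; by case: (N 1 t). Qed.

Lemma N_word l t : is_word S l -> N (wp l) t ->
  exists l1 a l2, l = l1 ++ a :: l2 /\ t = wp l1 * a * (wp l1)^-1.
Proof.
case: HN => HM HS; elim: l t => [|a l IH] t /=; first by rewrite N1.
move/is_word_cons => [Ha Hl]; rewrite HM HS //.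
case: eqP => [-> _|_ /= /(IH _ Hl) [l1 [b [l2 [-> E]]]]].
  by exists [::], a, l; rewrite /= g1l gInv1 g1r.
exists (a :: l1), b, l2; split => //=.
rewrite -(conjK a t) E gInvM !gA; by [].
Qed.

Lemma del_left l1 a l2 : is_word S (l1 ++ a :: l2) ->
  (wp l1 * a * (wp l1)^-1) * wp (l1 ++ a :: l2) = wp (l1 ++ l2).
Proof.
move/is_word_cat => [_ /is_word_cons [Ha _]].
rewrite !wp_cat wp_cons !gA gVK -(gA _ a a) (S_inv cox Ha) g1r; by [].
Qed.

Lemma N_len x t : N x t -> len (t * x) < len x.
Proof.
move=> HNx; case: (red_exists cox x) => l Hr; rewrite (len_red Hr); case: Hr => Hw Ex _; subst x.
case: (N_word Hw HNx) => l1 [a [l2 [El Et]]].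
have Hw' : is_word S (l1 ++ l2).
  by move: Hw; rewrite El => /is_word_cat [? /is_word_cons [_ ?]]; apply/is_word_cat.
rewrite Et El del_left -?El //.
apply: (leq_ltn_trans (len_le cox Hw')); rewrite El !size_cat /=; lia.
Qed.

Lemma N_refl t : T t -> N t t.
Proof.
case: HN => HM HS; move=> [u [s [Hs Et]]].
have Hinv : N u^-1 (u^-1 * t * u) = N u t.
  have := HM u u^-1 t; rewrite gV N1.
  by case: (N u t); case: (N u^-1 _).
have E1 : u^-1 * t * u = s by rewrite Et !gA gVl g1l gVK.
rewrite E1 in Hinv.
have Es : s^-1 * s * s = s by rewrite gVl g1l.
rewrite {1}Et -gA HM HM E1 (HS _ _ Hs) eqxx Es Hinv; by case: (N u t).
Qed.

Lemma N_of_len x t : T t -> len (t * x) < len x -> N x t.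
Proof.
case: HN => HM HS Ht Hlt; apply/negPn/negP => Hn.
have Ex : x = t * (t * x) by rewrite gA (T_inv cox Ht) g1l.
move: Hn; rewrite {1}Ex HM N_refl // (T_V cox Ht) (T_inv cox Ht) g1l /= negbK.
move=> /N_len; rewrite -Ex => H; move: (ltn_trans H Hlt); by rewrite ltnn.
Qed.
End WithN.

Lemma exch_left t l : T t -> is_word S l -> len (t * wp l) < len (wp l) ->
  exists l1 a l2, [/\ l = l1 ++ a :: l2, t = wp l1 * a * (wp l1)^-1 & t * wp l = wp (l1 ++ l2)].
Proof.
move=> Ht Hw Hlt; case: N_exists => N HN.
case: (N_word HN Hw (N_of_len HN Ht Hlt)) => l1 [a [l2 [El Et]]].
exists l1, a, l2; split => //; rewrite El Et del_left // -El //.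
Qed.

Lemma exch_right t l : T t -> is_word S l -> len (wp l * t) < len (wp l) ->
  exists l1 a l2, l = l1 ++ a :: l2 /\ wp l * t = wp (l1 ++ l2).
Proof.
move=> Ht Hw Hlt.
have Hw' := is_word_rev Hw.
have Hr : wp (rev l) = (wp l)^-1 := wp_rev_inv (S_inv cox) Hw.
have Hlt' : len (t * wp (rev l)) < len (wp (rev l)).
  by rewrite Hr -(T_V cox Ht) -gInvM !(len_inv cox).
case: (exch_left Ht Hw' Hlt') => m1 [a [m2 [Em _ E2]]].
exists (rev m2), a, (rev m1); split.
  by rewrite -(revK l) Em rev_cat rev_cons cat_rcons.
apply: gInvInj; rewrite gInvM (T_V cox Ht) -Hr E2 -rev_cat.
rewrite (wp_rev_inv (S_inv cox)) ?gInvK //.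
by move: Hw'; rewrite Em => /is_word_cat [? /is_word_cons [_ ?]]; apply/is_word_cat.
Qed.

End Nfun.

Section Par.
Variable W : groupType.
Variable S : W -> Prop.
Hypothesis cox : coxeter_system S.
Local Notation len := (coxeter_length S).
Local Notation wp := (@word_prod W).
Local Notation T := (reflection S).
Implicit Types (l : seq W) (x y : W).

Lemma len_ge1 x a : S a -> len x <= (len (x * a)).+1.
Proof.
move=> Ha; have := len_mul cox (x * a) a; rewrite -gA (S_inv cox Ha) g1r (lenS cox Ha).
by rewrite addn1.
Qed.
Lemma len_ge1l x a : S a -> len x <= (len (a * x)).+1.
Proof.
move=> Ha; have := len_mul cox a (a * x); rewrite gA (S_inv cox Ha) g1l (lenS cox Ha).
by rewrite add1n.
Qed.
Lemma len_le1l x a : S a -> len (a * x) <= (len x).+1.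
Proof. move=> Ha; have := len_mul cox a x; by rewrite (lenS cox Ha) add1n. Qed.

Lemma deletion l : is_word S l -> exists l', subseq l' l /\ is_reduced_word S (wp l) l'.
Proof.
elim: l => [|a l IH].
  move=> _; exists [::]; split => //; split => //; exact: is_word_nil.
move/is_word_cons => [Ha Hl]; case: (IH Hl) => s' [Hsub Hr].
have Hls := len_red Hr; case: Hr => Hw' Ew _.
case: (ltnP (len (a * wp l)) (len (wp l))) => Hc.
  rewrite -Ew in Hc; case: (exch_left cox (S_T Ha) Hw' Hc) => l1 [b [l2 [Es _ E2]]].
  exists (l1 ++ l2); split.
    apply: subseq_trans (subseq_cons l a); apply: subseq_trans Hsub.
    by rewrite Es; apply: cat_subseq => //; exact: subseq_cons.
  have Hw12 : is_word S (l1 ++ l2).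
    by move: Hw'; rewrite Es => /is_word_cat [? /is_word_cons [_ ?]]; apply/is_word_cat.
  apply: (red_of_len_eq cox Hw12); first by rewrite /= -E2 Ew.
  have H1 : len (wp l) <= (len (a * wp l)).+1 := len_ge1l (wp l) Ha.
  have H2 : len (wp (l1 ++ l2)) <= size (l1 ++ l2) := len_le cox Hw12.
  have E3 : wp (l1 ++ l2) = a * wp l by rewrite -E2 Ew.
  have Hsz : size s' = (size (l1 ++ l2)).+1 by rewrite Es !size_cat /= addnS.
  rewrite E3 in H2; rewrite /=; apply/eqP; rewrite eqn_leq H2 andbT -ltnS -Hsz -Hls; exact: H1.
exists (a :: s'); split; first by rewrite /= eqxx.
have Hw2 : is_word S (a :: s') by apply/is_word_cons.
apply: (red_of_len_eq cox Hw2); first by rewrite /= Ew.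
have H1 : len (a * wp l) <= (len (wp l)).+1 := len_le1l (wp l) Ha.
have H2 : len (a * wp l) <> len (wp l) := len_Tl_neq cox (x:=wp l) (S_T Ha).
move: H1 H2 Hc; rewrite /= -Hls; set n1 := len (a * wp l); set n0 := len (wp l). lia.
Qed.

Lemma len_single a : S a -> is_reduced_word S a [:: a].
Proof.
move=> Ha; apply: (red_of_len_eq cox _).
- by apply/is_word_cons; split => //; exact: is_word_nil.
- by rewrite /= g1r.
- by rewrite (lenS cox Ha).
Qed.

Section SubS.
Variable A : W -> Prop.
Hypothesis HA : forall a, A a -> S a.
Lemma A_inv a : A a -> a * a = 1. Proof. by move/HA/(S_inv cox). Qed.

Lemma par_S r : S r -> in_parabolic A r -> A r.
Proof.
move=> Hr [l [Hl El]].
case: (deletion (is_word_impl HA Hl)) => s' [Hsub Hred].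
have Hs := len_red Hred; rewrite El (lenS cox Hr) in Hs.
case: Hred => _ Es _; move: Hs Hsub Es; case: s' => [|b [|]] //= _ Hsub.
rewrite g1r El => <-; apply: (is_word_subseq Hsub Hl); by rewrite inE.
Qed.

Lemma par_red_aux n : forall x l, len x <= n -> in_parabolic A x -> is_reduced_word S x l -> is_word A l.
Proof.
elim: n => [|n IH] x l Hn HxA Hr.
  have Hs := len_red Hr; move: Hn; rewrite Hs leqn0 => /nilP ->; exact: is_word_nil.
case: HxA => al [Hal Eal].
case: (deletion (is_word_impl HA Hal)) => s' [Hsub Hred'].
have Hs' := len_red Hred'.
have Hws' : is_word A s' := is_word_subseq Hsub Hal.
case: Hred' => _ Es' _; rewrite Eal in Hs' Es'.
case/lastP: s' Hs' Es' Hws' Hsub => [|s'' y] Hs' Es' Hws' Hsub.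
  by have := len_red Hr; rewrite Hs' /= => /esym/size0nil ->; exact: is_word_nil.
move: Hws' => /is_word_rcons [Hws'' Hy].
have Hxy : x * y = wp s'' by rewrite -Es' wp_rcons -gA (A_inv Hy) g1r.
have Hlxy : len (x * y) < len x.
  rewrite Hxy Hs' size_rcons ltnS; apply: (len_le cox); exact: (is_word_impl HA Hws'').
have Hls := len_red Hr; case: Hr => Hw El _.
rewrite -El in Hlxy; case: (exch_right cox (S_T (HA Hy)) Hw Hlxy) => l1 [a [l2 [E1 E2]]].
have Hw12 : is_word S (l1 ++ l2).
  by move: Hw; rewrite E1 => /is_word_cat [? /is_word_cons [_ ?]]; apply/is_word_cat.
have Hr12 : is_reduced_word S (x * y) (l1 ++ l2).
  apply: (red_of_len_eq cox Hw12); first by rewrite -E2 El.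
  have H1 : len x <= (len (x * y)).+1 := len_ge1 x (HA Hy).
  have E3 : wp (l1 ++ l2) = x * y by rewrite -E2 El.
  have H2 : len (x * y) <= size (l1 ++ l2) by rewrite -E3; exact: (len_le cox Hw12).
  have Hsz : size l = (size (l1 ++ l2)).+1 by rewrite E1 !size_cat /= addnS.
  move: H1 H2 Hsz Hls; set n1 := len (x * y); set n0 := len x; lia.
have IH12 : is_word A (l1 ++ l2).
  apply: (IH (x * y)) Hr12; last by rewrite Hxy; exact: par_word Hws''.
  rewrite El in Hlxy; by rewrite -ltnS; apply: leq_trans Hlxy _.
move: IH12 => /is_word_cat [H1 H2].
have Ha : A a.
  apply: par_S; first by move: Hw; rewrite E1 => /is_word_cat [_ /is_word_cons []].
  have Ea : a = wp l2 * y^-1 * (wp l2)^-1.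
    move: E2; rewrite E1 !wp_cat wp_cons -!gA => /gI.
    move=> E; apply: (gIr (x := wp l2 * y)); by rewrite E !gA gVK gVK.
  rewrite Ea; apply: parM; first apply: parM; [exact: par_word|apply: parV A_inv _; exact: par_gen|].
  apply: parV A_inv _; exact: par_word.
by rewrite E1; apply/is_word_cat; split => //; apply/is_word_cons.
Qed.

Lemma par_red x l : in_parabolic A x -> is_reduced_word S x l -> is_word A l.
Proof. exact: par_red_aux (leqnn _). Qed.
End SubS.

Lemma supp_iff x l r : is_reduced_word S x l -> supp S x r <-> S r /\ r \in l.
Proof.
move=> Hr; split; last by case=> Hs Hin; split => //; exists l.
case=> Hs [l' [Hr' Hin]]; split => //.
have HA : forall a, (fun y => S y /\ y \in l) a -> S a by move=> a [].
have Hx : in_parabolic (fun y => S y /\ y \in l) x.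
  case: Hr => Hw Ex _; rewrite -Ex; apply: par_word => y Hy; split => //; exact: Hw.
by case: (par_red HA Hx Hr' Hin).
Qed.

Lemma all_s x l s : S s -> is_reduced_word S x l -> (forall r, r \in l -> r = s) -> x = 1 \/ x = s.
Proof.
move=> Hs Hr Hall; have Hl := len_red Hr; case: Hr => Hw Ex _.
move: Hl Hw Ex Hall; case: l => [|a [|b l]] /= Hl Hw Ex Hall.
- by left.
- by right; rewrite -Ex g1r; apply: Hall; rewrite inE.
- exfalso; have Ea : a = s by apply: Hall; rewrite inE eqxx.
  have Eb : b = s by apply: Hall; rewrite !inE eqxx orbT.
  rewrite Ea Eb gA (S_inv cox Hs) g1l in Ex.
  have Hw' : is_word S l by move: Hw => /is_word_cons [_ /is_word_cons [_ ?]].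
  have := len_le cox Hw'; rewrite Ex Hl; lia.
Qed.

Lemma par_inter (A B : W -> Prop) s x : (forall a, A a -> S a) -> (forall a, B a -> S a) -> S s ->
  (forall r, A r -> B r -> r = s) -> in_parabolic A x -> in_parabolic B x -> x = 1 \/ x = s.
Proof.
move=> HA HB Hs Hab HxA HxB; case: (red_exists cox x) => l Hr.
apply: (all_s Hs Hr) => r Hin; apply: Hab; [exact: (par_red HA HxA Hr) | exact: (par_red HB HxB Hr)].
Qed.

End Par.

Section Mcr.
Variable W : groupType.
Variable S : W -> Prop.
Hypothesis cox : coxeter_system S.
Variable J : W -> Prop.
Hypothesis HJ : forall a, J a -> S a.
Local Notation len := (coxeter_length S).
Local Notation wp := (@word_prod W).
Local Notation T := (reflection S).
Local Notation WJ := (in_parabolic J).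
Implicit Types (l : seq W) (x y : W).

Lemma J_inv a : J a -> a * a = 1. Proof. by move/HJ/(S_inv cox). Qed.

Lemma mcr_ex x : exists u, (exists v, WJ v /\ u = x * v) /\ forall v, WJ v -> len u <= len (x * v).
Proof.
suff H : forall n v, WJ v -> len (x * v) <= n -> exists u, (exists v, WJ v /\ u = x * v) /\ forall v, WJ v -> len u <= len (x * v).
  exact: (H _ 1 (par1 J) (leqnn _)).
elim=> [|n IH] v Hv Hn.
  exists (x * v); split; first by exists v.
  by move=> v' _; move: Hn; rewrite leqn0 => /eqP ->.
case: (classic (exists v', WJ v' /\ len (x * v') < len (x * v))) => [[v' [Hv' Hlt]]|Hno].
  by apply: (IH v') => //; rewrite -ltnS; apply: leq_trans Hlt Hn.
exists (x * v); split; first by exists v.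
move=> v' Hv'; rewrite leqNgt; apply/negP => Hlt; apply: Hno; by exists v'.
Qed.

Lemma mcr_spec x : (exists v, WJ v /\ min_coset_rep S J x = x * v) /\
  forall v, WJ v -> len (min_coset_rep S J x) <= len (x * v).
Proof. exact: (epsilon_spec (inhabits (1 : W)) _ (mcr_ex x)). Qed.

Definition Jmin a := forall b, WJ b -> len a <= len (a * b).

Lemma mcr_min x : Jmin (min_coset_rep S J x).
Proof.
case: (mcr_spec x) => [[v [Hv ->]] Hm] b Hb.
rewrite -gA; apply: Hm; exact: parM.
Qed.

Lemma min_add_word a l : Jmin a -> is_reduced_word S (wp l) l -> is_word J l ->
  len (a * wp l) = len a + size l.
Proof.
move=> Ha; elim/last_ind: l => [|l r IH] Hr HwJ.
  by rewrite /= g1r addn0.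
have Hr' : is_reduced_word S (wp l) l by move: Hr; rewrite -cats1 => /(red_cat cox) [].
move: HwJ => /is_word_rcons [HlJ Hr0].
have IH' := IH Hr' HlJ.
rewrite wp_rcons gA size_rcons.
set y := a * wp l.
case: (len_mulS cox y (HJ Hr0)) => [->|[Hdown Hpos]]; first by rewrite IH' addnS.
exfalso.
case: (red_exists cox a) => la Hra; have Hla := len_red Hra; case: Hra => Hwa Ea _.
have Hwl : is_word S l := is_word_impl HJ HlJ.
have Hw : is_word S (la ++ l) by apply/is_word_cat.
have Hlt : len (wp (la ++ l) * r) < len (wp (la ++ l)).
  rewrite wp_cat Ea -/y Hdown; move: Hpos; set n := len y; lia.
case: (exch_right cox (S_T (HJ Hr0)) Hw Hlt) => l1 [c [l2 [E1 E2]]].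
case: (cat_cons_eq (esym E1)) => [[m [Ela El2]]|[m [El El1]]].
- (* deleted letter in la *)
  have Ha' : a * (wp l * r * (wp l)^-1) = wp (l1 ++ m).
    apply: (gIr (x := wp l)); rewrite -!gA gVl g1r gA.
    by rewrite -{1}Ea -wp_cat E2 El2 catA wp_cat.
  have Hb : WJ (wp l * r * (wp l)^-1).
    apply: parM; first apply: parM; [exact: par_word|exact: par_gen|].
    apply: parV J_inv _; exact: par_word.
  have H1 := Ha _ Hb; rewrite Ha' in H1.
  have Hw1m : is_word S (l1 ++ m).
    by move: Hwa; rewrite Ela => /is_word_cat [? /is_word_cons [_ ?]]; apply/is_word_cat.
  have H2 := len_le cox Hw1m.
  have H3 : size la = (size (l1 ++ m)).+1 by rewrite Ela !size_cat /= addnS.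
  move: H1 H2 H3 Hla; set n := len a; set k := len (wp (l1 ++ m)); lia.
- (* deleted letter in l *)
  have E3 : wp l * r = wp (m ++ l2).
    by apply: (gI (x := a)); rewrite gA -{1}Ea -wp_cat E2 El1 -catA !wp_cat Ea.
  have Hr2 := len_red Hr; rewrite wp_rcons E3 size_rcons in Hr2.
  have Hwm : is_word S (m ++ l2).
    by move: Hwl; rewrite El => /is_word_cat [? /is_word_cons [_ ?]]; apply/is_word_cat.
  have H4 := len_le cox Hwm.
  have H5 : size l = (size (m ++ l2)).+1 by rewrite El !size_cat /= addnS.
  move: Hr2 H4 H5; set k := len (wp (m ++ l2)); lia.
Qed.

Lemma min_add a b : Jmin a -> WJ b -> len (a * b) = len a + len b.
Proof.
move=> Ha Hb; case: (red_exists cox b) => l Hr.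
have HlJ := par_red cox HJ Hb Hr.
have Hl := len_red Hr; case: (Hr) => _ Eb _.
by rewrite Hl -Eb; apply: min_add_word => //; rewrite Eb.
Qed.

Lemma mcr_unique a b0 : Jmin a -> WJ b0 -> min_coset_rep S J (a * b0) = a.
Proof.
move=> Ha Hb0; case: (mcr_spec (a * b0)) => [[v [Hv Em]] Hm].
have Hb1 : WJ (b0 * v) by exact: parM.
have E1 : len (min_coset_rep S J (a * b0)) = len a + len (b0 * v) by rewrite Em -gA min_add.
have E2 := Hm _ (parV J_inv Hb0); rewrite gK in E2.
have Hz : len (b0 * v) = 0%N by move: E1 E2; set k := len (b0 * v); set n := len a; lia.
by rewrite Em -gA (len_eq0 cox Hz) g1r.
Qed.

Lemma pp_eq x : x = min_coset_rep S J x * parabolic_part S J x.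
Proof. by rewrite /parabolic_part gVKl. Qed.

Lemma pp_in x : WJ (parabolic_part S J x).
Proof.
case: (mcr_spec x) => [[v [Hv Em]] _]; rewrite /parabolic_part Em gInvM -gA gVl g1r.
exact: parV J_inv Hv.
Qed.

Lemma pp_unique a b0 : Jmin a -> WJ b0 -> parabolic_part S J (a * b0) = b0.
Proof. by move=> Ha Hb; rewrite /parabolic_part mcr_unique // gKl. Qed.

End Mcr.

Section Bru.
Variable W : groupType.
Variable S : W -> Prop.
Hypothesis cox : coxeter_system S.
Local Notation len := (coxeter_length S).
Local Notation wp := (@word_prod W).
Local Notation T := (reflection S).
Local Notation le := (bruhat_le S).
Implicit Types (l : seq W) (x y : W).

Lemma le_refl x : le x x. Proof. exact: rt_refl. Qed.
Lemma le_trans x y z : le x y -> le y z -> le x z. Proof. exact: rt_trans. Qed.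
Lemma step_right x t : T t -> len x < len (x * t) -> le x (x * t).
Proof. by move=> Ht Hl; apply: rt_step; exists t; split. Qed.
Lemma step_left y t : T t -> len y < len (t * y) -> le y (t * y).
Proof.
move=> Ht Hl; have E : t * y = y * (y^-1 * t * y) by rewrite !gA gV g1l.
rewrite E; apply: step_right; last by rewrite -E.
have := T_conj (y^-1) Ht; by rewrite gInvK.
Qed.

Lemma Z_step x w r : S r -> bruhat_step S x w -> le (r * x) w \/ le (r * x) (r * w).
Proof.
move=> Hr [t [Ht Ew Hlt]].
case: (classic (r * x = w)) => [<-|Hne]; first by left; exact: le_refl.
case: (ltnP (len (r * x)) (len x)) => Hc.
  left; apply: (@le_trans _ x); last by apply: rt_step; exists t.
  have Ex : r * (r * x) = x by rewrite gA (S_inv cox Hr) g1l.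
  have Hs := @step_left (r * x) r (S_T Hr); rewrite Ex in Hs; exact: Hs.
have H1 : len (r * x) <= (len x).+1 := len_le1l cox x Hr.
have H2 : len (r * x) <> len x := len_Tl_neq cox (x:=x) (S_T Hr).
have Hrx : len (r * x) = (len x).+1 by move: H1 H2 Hc; set n := len (r * x); set k := len x; lia.
have Erw : r * w = r * x * t by rewrite Ew gA.
case: (ltnP (len (r * x)) (len (r * w))) => Hc2.
  by right; rewrite Erw; apply: step_right => //; rewrite -Erw.
exfalso.
have H3 : len (r * x * t) <> len (r * x) := len_T_neq cox (x:=r * x) Ht.
rewrite -Erw in H3.
have H4 : len w <= (len (r * w)).+1 := len_ge1l cox w Hr.
have Hrw : (len (r * w)).+1 = len w.
  move: H3 Hc2 Hrx Hlt H4; set a := len (r * w); set b := len (r * x); set c := len x; set d := len w; lia.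
case: (red_exists cox (r * w)) => rho Hrho; have Hlrho := len_red Hrho; case: Hrho => Hwr Erho _.
have Hw' : is_word S (r :: rho) by apply/is_word_cons.
have Ewp : wp (r :: rho) = w by rewrite /= Erho gA (S_inv cox Hr) g1l.
have Hlt2 : len (wp (r :: rho) * t) < len (wp (r :: rho)).
  rewrite Ewp Ew -gA (T_inv cox Ht) g1r -Ew; exact: Hlt.
case: (exch_right cox Ht Hw' Hlt2) => l1 [c [l2 [E1 E2]]].
rewrite Ewp Ew -gA (T_inv cox Ht) g1r in E2.
move: E1 E2; case: l1 => [|c' l1] /= [Ec El].
  move=> Ex; apply: Hne; by rewrite Ex -El Erho gA (S_inv cox Hr) g1l.
move=> Ex; rewrite -Ec in Ex.
have Hw2 : is_word S (l1 ++ l2).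
  by move: Hwr; rewrite El => /is_word_cat [? /is_word_cons [_ ?]]; apply/is_word_cat.
have H5 := len_le cox Hw2.
have E5 : r * x = wp (l1 ++ l2) by rewrite Ex gA (S_inv cox Hr) g1l.
have H6 : size rho = (size (l1 ++ l2)).+1 by rewrite El !size_cat /= addnS.
rewrite -E5 in H5.
move: H5 H6 Hlrho Hrx Hrw Hlt; set a := len (r * x); set b := len (r * w); set d := len w; set k := len x; lia.
Qed.

Lemma Z_le x w r : S r -> le x w -> le (r * x) w \/ le (r * x) (r * w).
Proof.
move=> Hr H; elim: H => {x w} [x w Hs|x|x y z Hxy IH1 Hyz IH2].
- exact: Z_step.
- right; exact: le_refl.
- case: IH1 => H1; first by left; exact: le_trans H1 Hyz.
  case: IH2 => H2; [left|right]; exact: le_trans H1 H2.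
Qed.

Lemma subword_le w l s : is_reduced_word S w l -> subseq s l -> le (wp s) w.
Proof.
elim: l w s => [|a l IH] w s Hr.
  rewrite subseq0 => /eqP ->; case: Hr => _ <- _; exact: le_refl.
have Hr' := red_cons cox Hr; have Hl := len_red Hr; have Hl' := len_red Hr'.
case: (Hr) => Hw Ew _; move: Hw => /is_word_cons [Ha _].
have Hle : le (wp l) w.
  rewrite -Ew /=; apply: step_left; first exact: S_T.
  have E : a * wp l = w by rewrite -Ew.
  by rewrite E Hl Hl'.
case: s => [|b s] /=.
  move=> _; apply: le_trans Hle; apply: (IH _ [::] Hr'); exact: sub0seq.
case: eqP => [->|_] Hs.
  case: (Z_le Ha (IH _ _ Hr' Hs)) => H; first exact: le_trans H Hle.
  by rewrite -Ew.
apply: le_trans Hle; exact: (IH _ _ Hr' Hs).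
Qed.

Lemma le_subword x w : le x w -> forall l, is_reduced_word S w l -> exists s, subseq s l /\ wp s = x.
Proof.
elim=> {x w} [x y [t [Ht Ey Hlt]]|x|x y z Hxy IH1 Hyz IH2] l Hr.
- case: (Hr) => Hw Ew _.
  have Hlt2 : len (wp l * t) < len (wp l) by rewrite Ew Ey -gA (T_inv cox Ht) g1r -Ey.
  case: (exch_right cox Ht Hw Hlt2) => l1 [c [l2 [E1 E2]]].
  exists (l1 ++ l2); split.
    rewrite E1; apply: cat_subseq => //; exact: subseq_cons.
  by rewrite -E2 Ew Ey -gA (T_inv cox Ht) g1r.
- by exists l; split; [exact: subseq_refl | case: Hr].
- case: (IH2 l Hr) => s [Hs Es].
  have Hws : is_word S s by apply: is_word_subseq Hs _; case: Hr.
  case: (deletion cox Hws) => s' [Hs' Hr'].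
  rewrite Es in Hr'; case: (IH1 s' Hr') => s'' [Hs'' Es''].
  exists s''; split => //; exact: subseq_trans Hs'' (subseq_trans Hs' Hs).
Qed.

End Bru.

Section RF.
Variable W : groupType.
Variable S : W -> Prop.
Hypothesis cox : coxeter_system S.
Local Notation len := (coxeter_length S).
Local Notation wp := (@word_prod W).
Local Notation T := (reflection S).
Variables (K J' : W -> Prop) (s : W).
Hypotheses (HK : forall a, K a -> S a) (HJ' : forall a, J' a -> S a) (Hs : S s)
  (Hint : forall r, K r -> J' r -> r = s).
Implicit Types (l : seq W) (x y : W).

Lemma K_inv a : K a -> a * a = 1. Proof. by move/HK/(S_inv cox). Qed.
Lemma J'_inv a : J' a -> a * a = 1. Proof. by move/HJ'/(S_inv cox). Qed.

Lemma inter1 x : in_parabolic K x -> in_parabolic J' x -> x = 1 \/ x = s.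
Proof. exact: (par_inter cox HK HJ' Hs Hint). Qed.

Lemma one_s_mul x y : (x = 1 \/ x = s) -> (y = 1 \/ y = s) -> x * y = 1 \/ x * y = s.
Proof.
by case=> ->; case=> ->; rewrite ?g1l ?g1r; [left|right|right|left; exact: (S_inv cox Hs)].
Qed.

Lemma refl_factor c d : in_parabolic K c -> in_parabolic J' d -> T (c * d) ->
  (c = 1 \/ c = s) \/ (d = 1 \/ d = s).
Proof.
move=> [kap [Hkap Ec]] [del [Hdel Ed]] Ht.
have Hw0 : is_word S (kap ++ del) by apply/is_word_cat; split; [exact: is_word_impl HK Hkap|exact: is_word_impl HJ' Hdel].
case: (deletion cox Hw0) => sig [Hsub Hred].
rewrite wp_cat Ec Ed in Hred.
case: (subseq_cat_split Hsub) => s1 [s2 [Es Hs1 Hs2]].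
have Hs1K : is_word K s1 := is_word_subseq Hs1 Hkap.
have Hs2J : is_word J' s2 := is_word_subseq Hs2 Hdel.
have Hcd : wp s1 * wp s2 = c * d by case: Hred => _ <- _; rewrite Es wp_cat.
case: (Hred) => Hwsig Esig _.
have Hlt : len ((c * d) * wp sig) < len (wp sig).
  rewrite Esig (T_inv cox Ht) (len1 cox) lt0n; apply/eqP => /(len_eq0 cox); exact: (T_neq1 cox Ht).
case: (exch_left cox Ht Hwsig Hlt) => l1 [a [l2 [El Et E1]]].
rewrite Esig (T_inv cox Ht) in E1.
have Key : (wp s1 = 1 \/ wp s1 = s) \/ (wp s2 = 1 \/ wp s2 = s).
  case: (cat_cons_eq (etrans (esym El) Es)) => [[m [E1m E2m]]|[m [E1m E2m]]].
  - right; apply: inter1; last exact: par_word.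
    have Hl1m : is_word K (l1 ++ a :: m) by rewrite -E1m.
    move: Hl1m => /is_word_cat [Hl1 /is_word_cons [Ha Hm]].
    have E3 : wp s2 = (wp l1 * wp m)^-1.
      symmetry; apply: gInvE; by rewrite -gA -!wp_cat -E2m -E1.
    rewrite E3; apply: parV K_inv _; apply: parM; exact: par_word.
  - left; apply: inter1; first exact: par_word.
    have Hm2 : is_word J' (m ++ a :: l2) by rewrite -E1m.
    move: Hm2 => /is_word_cat [Hm /is_word_cons [Ha _]].
    have E : wp s2 = (wp m * a * (wp m)^-1) * (wp s1)^-1.
      apply: (gI (x := wp s1)); rewrite Hcd Et E2m wp_cat gInvM; by rewrite !gA.
    have E' : wp s1 = (wp s2)^-1 * (wp m * a * (wp m)^-1) by rewrite E gInvM gInvK gVK.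
    rewrite E'; apply: parM; first by apply: parV J'_inv _; exact: par_word.
    apply: parM; first apply: parM; [exact: par_word|exact: par_gen|].
    apply: parV J'_inv _; exact: par_word.
have HcK : in_parabolic K c by rewrite -Ec; exact: par_word.
have HdJ : in_parabolic J' d by rewrite -Ed; exact: par_word.
case: Key => [Hc1|Hd1].
- left; have He : (wp s1)^-1 * c = wp s2 * d^-1.
    apply: (gI (x := wp s1)); apply: (gIr (x := d)); by rewrite gVKl (gA (wp s1)) gVK -Hcd.
  have He1 : (wp s1)^-1 * c = 1 \/ (wp s1)^-1 * c = s.
    apply: inter1; first by apply: parM => //; apply: parV K_inv _; exact: par_word.
    rewrite He; apply: parM; [exact: par_word|exact: parV J'_inv HdJ].
  have -> : c = wp s1 * ((wp s1)^-1 * c) by rewrite gVKl.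
  apply: one_s_mul => //.
- right; have He : d * (wp s2)^-1 = c^-1 * wp s1.
    apply: (gI (x := c)); apply: (gIr (x := wp s2)); by rewrite (gA c d) gVK gVKl Hcd.
  have He1 : d * (wp s2)^-1 = 1 \/ d * (wp s2)^-1 = s.
    apply: inter1; last by apply: parM => //; apply: parV J'_inv _; exact: par_word.
    rewrite He; apply: parM; [exact: parV K_inv HcK|exact: par_word].
  have -> : d = d * (wp s2)^-1 * wp s2 by rewrite gVK.
  apply: one_s_mul => //.
Qed.


End RF.

Section Main.
Variables (W : groupType) (S J : W -> Prop) (w s : W).
Hypotheses (cox : coxeter_system S) (HJS : forall x, J x -> S x)
  (HBP : BP_decomposition S J w) (Hs : S s)
  (Hsupp : forall r, (supp S (min_coset_rep S J w) r /\ supp S (parabolic_part S J w) r) <-> r = s).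
Local Notation len := (coxeter_length S).
Local Notation wp := (@word_prod W).
Local Notation T := (reflection S).
Local Notation le := (bruhat_le S).
Local Notation u := (min_coset_rep S J w).
Local Notation v := (parabolic_part S J w).
Variables (wu wv' : seq W).
Hypotheses (Hru : is_reduced_word S u wu) (Hrv : is_reduced_word S v (s :: wv')).
Implicit Types (l : seq W) (x y : W).

Definition K y := S y /\ y \in wu.
Definition J' y := S y /\ y \in s :: wv'.
Lemma HK a : K a -> S a. Proof. by case. Qed.
Lemma HJ' a : J' a -> S a. Proof. by case. Qed.
Lemma K_inv' a : K a -> a * a = 1. Proof. by move/HK/(S_inv cox). Qed.
Lemma J'_inv' a : J' a -> a * a = 1. Proof. by move/HJ'/(S_inv cox). Qed.

Lemma J'J r : J' r -> J r.
Proof. case=> _ Hin; exact: (par_red cox HJS (pp_in cox HJS w) Hrv Hin). Qed.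
Lemma J's : J' s. Proof. by split => //; rewrite inE eqxx. Qed.
Lemma supp_u r : K r -> supp S u r. Proof. by case=> Hr Hin; split => //; exists wu. Qed.
Lemma supp_v r : J' r -> supp S v r. Proof. by case=> Hr Hin; split => //; exists (s :: wv'). Qed.
Lemma KJ' r : K r -> J' r -> r = s.
Proof. by move=> H1 H2; apply/Hsupp; split; [exact: supp_u | exact: supp_v]. Qed.
Lemma Ks : K s.
Proof. have [H1 _] := proj2 (Hsupp s) erefl; have [H _] := supp_iff cox s Hru; exact: H H1. Qed.

Lemma KJ r : K r -> J r -> r = s.
Proof.
move=> HKr HJr; have [Sr Hlt] := HBP (supp_u HKr) HJr.
case: (Hrv) => Hw Ev _; rewrite -Ev in Hlt.
case: (exch_left cox (S_T Sr) Hw Hlt) => l1 [a [l2 [El Et _]]].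
apply: KJ' => //; apply: (par_S cox HJ') => //.
have HwJ' : is_word J' (s :: wv') by move=> y Hy; split => //; exact: Hw.
rewrite El in HwJ'; move: HwJ' => /is_word_cat [H1 /is_word_cons [Ha _]].
rewrite Et; apply: parM; first apply: parM; [exact: par_word|exact: par_gen|].
apply: parV J'_inv' _; exact: par_word.
Qed.

Lemma Hw_uv : w = u * v. Proof. exact: pp_eq. Qed.

Lemma Hred_w : is_reduced_word S w (wu ++ s :: wv').
Proof.
have Hl := min_add cox HJS (mcr_min S w) (pp_in cox HJS w).
case: (Hru) => Hwu Eu _; case: (Hrv) => Hwv Ev _.
apply: (red_of_len_eq cox); first by apply/is_word_cat.
  by rewrite wp_cat Eu Ev -Hw_uv.
have -> : len w = len (u * v) by rewrite -Hw_uv.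
by rewrite Hl size_cat (len_red Hru) (len_red Hrv).
Qed.

Lemma subseq_cons_split (x0 : W) l1 l2 : subseq l1 (x0 :: l2) ->
  subseq l1 l2 \/ exists l1', l1 = x0 :: l1' /\ subseq l1' l2.
Proof.
case: l1 => [|y l1] /=; first by left; exact: sub0seq.
case: eqP => [->|_] H; [right; by exists l1 | by left].
Qed.

Lemma Jmin_of a : in_parabolic K a -> len a < len (a * s) -> Jmin S J a.
Proof.
move=> HaK Has.
case: (mcr_spec S J a) => [[v0 [Hv0 Em]] _].
set m := min_coset_rep S J a in Em.
have Hm : Jmin S J m := mcr_min S a.
have Ea : a = m * v0^-1 by rewrite Em gK.
have Hv0' : in_parabolic J v0^-1 := parV (fun b Hb => S_inv cox (HJS Hb)) Hv0.
have Hl := min_add cox HJS Hm Hv0'.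
case: (red_exists cox m) => lm Hrm; case: (red_exists cox v0^-1) => lv Hrv0.
have Hra : is_reduced_word S a (lm ++ lv).
  case: (Hrm) => Hw1 E1 _; case: (Hrv0) => Hw2 E2 _.
  apply: (red_of_len_eq cox); first by apply/is_word_cat.
    by rewrite wp_cat E1 E2 -Ea.
  by rewrite size_cat -(len_red Hrm) -(len_red Hrv0) -Hl -Ea.
have HlvK : is_word K lv by have := par_red cox HK HaK Hra; move/is_word_cat => [].
have HlvJ : is_word J lv := par_red cox HJS Hv0' Hrv0.
case: (all_s cox Hs Hrv0 (fun r Hin => KJ (HlvK r Hin) (HlvJ r Hin))) => Hv.
  rewrite Ea Hv g1r; exact: Hm.
exfalso; rewrite Ea Hv -gA (S_inv cox Hs) g1r (min_add cox HJS Hm (par_gen (J'J J's))) (lenS cox Hs) in Has.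
by rewrite addn1 ltnNge leqnSn in Has.
Qed.

Lemma VL x : le x w -> exists a b,
  [/\ x = a * b, in_parabolic K a, len a < len (a * s), in_parabolic J' b & le (a * s * b) w].
Proof.
move=> Hx; case: (le_subword cox Hx Hred_w) => sig [Hsub Esig].
case: (subseq_cat_split Hsub) => s1 [s2 [Es Hs1 Hs2]].
have Hs1K : is_word K s1.
  move=> y Hy; split; last exact: (mem_subseq Hs1 Hy).
  by case: Hru => Hw _ _; apply: Hw; exact: (mem_subseq Hs1 Hy).
have Hs2J : is_word J' s2.
  move=> y Hy; split; last exact: (mem_subseq Hs2 Hy).
  by case: Hrv => Hw _ _; apply: Hw; exact: (mem_subseq Hs2 Hy).
set a1 := wp s1; set b1 := wp s2.
have Ex : x = a1 * b1 by rewrite -Esig Es wp_cat.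
have Ha1K : in_parabolic K a1 := par_word Hs1K.
have Hb1J : in_parabolic J' b1 := par_word Hs2J.
have [a [c [Ea1 Hc Has HaK]]] : exists a c, [/\ a1 = a * c, c = 1 \/ c = s, len a < len (a * s) & in_parabolic K a].
  case: (ltnP (len (a1 * s)) (len a1)) => Hc.
    exists (a1 * s), s; split; last by apply: parM => //; exact: par_gen Ks.
    - by rewrite -gA (S_inv cox Hs) g1r.
    - by right.
    - by rewrite -gA (S_inv cox Hs) g1r.
  exists a1, 1; split => //; [by rewrite g1r | by left |].
  have := len_T_neq cox (x:=a1) (S_T Hs); move: Hc; set n := len (a1 * s); set k := len a1; lia.
have HcJ' : in_parabolic J' c by case: Hc => ->; [exact: par1 | exact: par_gen J's].
have Hcs : c * s = s * c by case: Hc => ->; rewrite ?g1l ?g1r.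
exists a, (c * b1); split.
- by rewrite Ex Ea1 gA.
- exact: HaK.
- exact: Has.
- exact: parM.
- have -> : a * s * (c * b1) = a1 * s * b1 by rewrite Ea1 -(gA a c s) Hcs !gA.
  case: (subseq_cons_split Hs2) => [Hs2'|[s2' [Es2 Hs2']]].
  + have Hsub' : subseq (s1 ++ s :: s2) (wu ++ s :: wv').
      by apply: cat_subseq => //; rewrite /= eqxx.
    have := subword_le cox Hred_w Hsub'; by rewrite wp_cat /= gA.
  + have Hsub' : subseq (s1 ++ s2') (wu ++ s :: wv').
      by apply: cat_subseq => //; apply: subseq_trans (subseq_cons _ _).
    have := subword_le cox Hred_w Hsub'; rewrite wp_cat.
    by rewrite /b1 Es2 /= gA -(gA a1 s s) (S_inv cox Hs) g1r.
Qed.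

Definition phi x := min_coset_rep S J x * s * parabolic_part S J x.

Lemma phi_ab a b : in_parabolic K a -> len a < len (a * s) -> in_parabolic J' b ->
  phi (a * b) = a * s * b.
Proof.
move=> HaK Has HbJ; have Hm := Jmin_of HaK Has.
have HbJ0 : in_parabolic J b := par_impl J'J HbJ.
by rewrite /phi (mcr_unique cox HJS Hm HbJ0) (pp_unique cox HJS Hm HbJ0).
Qed.

Lemma phi_in x : le x w -> le (phi x) w.
Proof. by move/VL => [a [b [-> HaK Has HbJ Hle]]]; rewrite phi_ab. Qed.

Lemma phi_inv x : le x w -> phi (phi x) = x.
Proof.
move/VL => [a [b [-> HaK Has HbJ Hle]]]; rewrite phi_ab // -gA phi_ab //.
  by rewrite gA -(gA a s s) (S_inv cox Hs) g1r.
apply: parM => //; exact: par_gen J's.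
Qed.

Lemma inv_mul_cancel (g b b' : W) : (g * b)^-1 * (g * b') = b^-1 * b'.
Proof. by rewrite gInvM -gA gKl. Qed.

Lemma edge_fwd x y : le x w -> le y w -> bruhat_edge S x y -> bruhat_edge S (phi x) (phi y).
Proof.
move=> Hx Hy [t [Ht Ey]].
case: (VL Hx) => a [b [Ex HaK Has HbJ _]]; case: (VL Hy) => a' [b' [Ey' Ha'K Ha's Hb'J _]].
rewrite Ex Ey' !phi_ab //.
exists ((a * s * b)^-1 * (a' * s * b')); split; last by rewrite gVKl.
have Eab : a' * b' = a * b * t by rewrite -Ey' -Ex.
case: (classic (a = a')) => [Eaa|Hne].
  subst a'; rewrite inv_mul_cancel.
  suff -> : b^-1 * b' = t by [].
  by rewrite -(inv_mul_cancel a) Eab gKl.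
set c0 := a^-1 * a'; set d := b' * b^-1.
have Hcd : c0 * d = b * t * b^-1.
  rewrite /c0 /d (gA (a^-1 * a') b' b^-1) -(gA a^-1 a' b') Eab !gA gVl g1l; by [].
have HcdT : T (c0 * d) by rewrite Hcd; exact: T_conj.
have Hc0K : in_parabolic K c0 by apply: parM => //; exact: parV K_inv' HaK.
have HdJ : in_parabolic J' d by apply: parM => //; exact: parV J'_inv' HbJ.
case: (refl_factor cox HK HJ' Hs KJ' Hc0K HdJ HcdT) => [[Hc0|Hc0]|Hd].
- exfalso; apply: Hne; apply: (gI (x := a^-1)); by rewrite -/c0 Hc0 gVl.
- exfalso; have Ea' : a' = a * s by rewrite -Hc0 /c0 gVKl.
  rewrite Ea' -gA (S_inv cox Hs) g1r in Ha's.
  move: Has Ha's; set n := len a; set k := len (a * s); lia.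
- have Hds : d * s = s * d by case: Hd => ->; rewrite ?g1l ?g1r.
  rewrite /c0 /d in Hds HcdT *.
  have E : (a * s * b)^-1 * (a' * s * b') = (b^-1 * s) * (a^-1 * a' * (b' * b^-1)) * (b^-1 * s)^-1.
    rewrite !gInvM (S_V cox Hs) gInvK !gA.
    have Hds' : b^-1 * s * a^-1 * a' * b' * b^-1 * s = b^-1 * s * a^-1 * a' * s * b' * b^-1.
      by rewrite -(gA _ b' b^-1) -(gA _ (b' * b^-1) s) Hds !gA.
    by rewrite Hds' gVK.
  rewrite E; exact: T_conj.
Qed.

End Main.

Unset Implicit Arguments.
Set Strict Implicit.

Lemma one_le (W : groupType) (S : W -> Prop) (cox : coxeter_system S) (y : W) : bruhat_le S 1 y.
Proof.
case: (red_exists cox y) => l Hr.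
have := subword_le cox Hr (sub0seq l); by [].
Qed.

Theorem proposition3p4 (W : groupType) (S : W -> Prop) (J : W -> Prop) (w s : W) :
  coxeter_system S ->
  (forall x, J x -> S x) ->
  BP_decomposition S J w ->
  S s ->
  (forall r, (supp S (min_coset_rep S J w) r /\ supp S (parabolic_part S J w) r) <-> r = s) ->
  graph_automorphism (bruhat_interval S 1 w) (bruhat_edge S)
    (fun x => min_coset_rep S J x * s * parabolic_part S J x).
Proof.
move=> cox HJS HBP Hs Hsupp.
have [Hsu Hsv] := proj2 (Hsupp s) erefl.
have HJs : J s.
  case: Hsv => _ [rho [Hrho Hin]]; exact: (par_red cox HJS (pp_in cox HJS w) Hrho Hin).
have [_ Hdesc] := HBP s Hsu HJs.
case: (red_exists cox (min_coset_rep S J w)) => wu Hru.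
case: (red_exists cox (s * parabolic_part S J w)) => wv' Hrv'.
have Hrv : is_reduced_word S (parabolic_part S J w) (s :: wv').
  have Hl := len_red Hrv'; case: (Hrv') => Hw' E' _.
  apply: (red_of_len_eq cox).
  - by apply/is_word_cons.
  - by rewrite /= E' gA (S_inv cox Hs) g1l.
  - have H1 := len_ge1l cox (parabolic_part S J w) Hs.
    move: H1 Hdesc Hl; rewrite /=.
    set a := coxeter_length S (parabolic_part S J w).
    set b := coxeter_length S (s * parabolic_part S J w); lia.
have Pin := phi_in cox HJS HBP Hs Hsupp Hru Hrv.
have Pinv := phi_inv cox HJS HBP Hs Hsupp Hru Hrv.
have Pedge := edge_fwd cox HJS HBP Hs Hsupp Hru Hrv.
change (graph_automorphism (bruhat_interval S 1 w) (bruhat_edge S) (phi S J s)).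
split.
- move=> x [_ Hx]; split; [exact: one_le | exact: Pin].
- move=> x y [_ Hx] [_ Hy] E; by rewrite -(Pinv x Hx) -(Pinv y Hy) E.
- move=> y [_ Hy]; exists (phi S J s y); split; last exact: Pinv.
  split; [exact: one_le | exact: Pin].
- move=> x y [_ Hx] [_ Hy]; split; first exact: Pedge.
  move=> H; rewrite -(Pinv x Hx) -(Pinv y Hy); apply: Pedge => //; exact: Pin.
Qed.
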